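(* Let $(G;+,\cdot)$ be a nonassociative right semiring and let $f, g \colon G^n \to G$ be affine functions, $f(x_1,\dots,x_n) = \sum_{i=1}^n a_ix_i + c$, $g(x_1,\dots,x_n) = \sum_{i=1}^n b_ix_i + d$. Assume that $f$ and $g$ are linear (with $c=d=0$), or that $(G;+,\cdot)$ is cancellative. Then $f \equiv g$ if and only if $\langle a_1,\dots,a_n\rangle = \langle b_1,\dots,b_n\rangle$ (as multisets) and $c = d$.
   Context: A nonassociative right semiring is an algebra $(G;+,\cdot)$ such that $(G;+)$ is a commutative monoid with neutral element $0$; $(G;\cdot)$ is a groupoid (not necessarily associative) with a right identity $1$ ($a\cdot 1 = a$); multiplication right-distributes over addition ($(a+b)c = ac + bc$); and $a \cdot 0 = 0$ for all $a$. It is cancellative if $a+b = a+c$ implies $b = c$. A function $f \colon G^n \to G$ is affine if $f(x_1,\dots,x_n) = a_1x_1+\dots+a_nx_n + c$ for some $a_i, c \in G$; linear if $c = 0$. $\langle \cdot \rangle$ denotes a multiset. Two functions $f, g \colon A^n \to B$ are equivalent, $f \equiv g$, if there is a permutation $\sigma$ of $\{1,\dots,n\}$ with $f(x_1,\dots,x_n) = g(x_{\sigma(1)},\dots,x_{\sigma(n)})$ for all $(x_1,\dots,x_n)\in A^n$. *)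

(* Defs.v *)
From mathcomp Require Import all_boot all_fingroup.
From Stdlib Require Import List Permutation.
Set Implicit Arguments. Unset Strict Implicit. Unset Printing Implicit Defensive.

Record NARSemiring := {
  carrier :> Type;
  sadd : carrier -> carrier -> carrier;
  smul : carrier -> carrier -> carrier;
  szero : carrier;
  sone : carrier;
  saddA : forall a b c, sadd a (sadd b c) = sadd (sadd a b) c;
  saddC : forall a b, sadd a b = sadd b a;
  sadd0 : forall a, sadd a szero = a;
  smul1 : forall a, smul a sone = a;
  smulDl : forall a b c, smul (sadd a b) c = sadd (smul a c) (smul b c);
  smul0 : forall a, smul a szero = szero
}.

Definition cancellative (G : NARSemiring) : Prop :=
  forall a b c : G, sadd a b = sadd a c -> b = c.

Definition affine_fun (G : NARSemiring) (n : nat) (a : 'I_n -> G) (c : G)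
  (x : 'I_n -> G) : G :=
  sadd (\big[@sadd G / szero G]_(i < n) smul (a i) (x i)) c.

Definition fun_equiv (A B : Type) (n : nat) (f g : ('I_n -> A) -> B) : Prop :=
  exists s : 'S_n, forall x : 'I_n -> A, f x = g (fun i => x (s i)).

Definition multiset_eq (A : Type) (n : nat) (a b : 'I_n -> A) : Prop :=
  Permutation (map a (enum 'I_n)) (map b (enum 'I_n)).

(* Main.v *)
Require Import Defs.
From HB Require Import structures.
From mathcomp Require Import all_boot all_fingroup.
From Stdlib Require Import List Permutation.

Lemma sadd0l (G : NARSemiring) : left_id (szero G) (@sadd G).
Proof. by move=> x; rewrite saddC sadd0. Qed.

HB.instance Definition _ (G : NARSemiring) :=
  Monoid.isComLaw.Build G (szero G) (@sadd G) (@saddA G) (@saddC G) (@sadd0l G).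

Lemma lmap_map (A B : Type) (f : A -> B) (l : list A) : List.map f l = seq.map f l.
Proof. by elim: l => //= x l ->. Qed.

Lemma perm_eq_Perm (T : eqType) (s t : seq.seq T) : perm_eq s t -> Permutation s t.
Proof.
elim: s t => [|x s IH] t H.
  by move: H; rewrite perm_sym => /perm_nilP ->; constructor.
have xt : x \in t by rewrite -(perm_mem H) mem_head.
case/splitPr: xt H => t1 t2 H.
apply: Permutation_cons_app; apply: IH.
by rewrite -(perm_cons x) (seq.perm_trans H) // -cat1s perm_catCA.
Qed.

Lemma Perm_perm_eq (T : eqType) (s t : seq.seq T) : Permutation s t -> perm_eq s t.
Proof.
elim=> //=.
- by move=> x l l' _ H; rewrite perm_cons.
- by move=> x y l; apply/seq.permP => p /=; rewrite addnCA.
- by move=> l l' l'' _ H1 _ H2; apply: seq.perm_trans H1 H2.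
Qed.

Lemma big_delta (G : NARSemiring) n (F : 'I_n -> G) (P : 'I_n -> bool) j :
  (forall i, P i = (i == j)) ->
  \big[@sadd G/szero G]_(i < n) smul (F i) (if P i then sone G else szero G) = F j.
Proof.
move=> HP.
rewrite (bigD1 j) //= HP eqxx smul1 big1 ?sadd0 // => i /negbTE ij.
by rewrite HP ij smul0.
Qed.

Lemma big_zero (G : NARSemiring) n (F : 'I_n -> G) :
  \big[@sadd G/szero G]_(i < n) smul (F i) (szero G) = szero G.
Proof. by rewrite big1 // => i _; rewrite smul0. Qed.

Theorem mainTheorem10 (G : NARSemiring) (n : nat) (a b : 'I_n -> G) (c d : G) :
  ((c = szero G /\ d = szero G) \/ cancellative G) ->
  (fun_equiv (affine_fun a c) (affine_fun b d) <-> (multiset_eq a b /\ c = d)).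
Proof.
move=> Hcase; split.
- case=> s Hs.
  have cd : c = d.
    have := Hs (fun _ => szero G); rewrite /affine_fun !big_zero.
    by rewrite !sadd0l.
  split=> //.
  have ab : forall j, a j = b ((s^-1)%g j).
    move=> j; have := Hs (fun i => if i == j then sone G else szero G).
    rewrite /affine_fun (@big_delta _ _ a (fun i => i == j) j) //.
    rewrite (@big_delta _ _ b (fun i => s i == j) ((s^-1)%g j)); last first.
      by move=> i; rewrite (canF_eq (permK s)).
    rewrite -cd; case: Hcase => [[-> _]|Hc]; first by rewrite !sadd0.
    by rewrite saddC [sadd (b _) _]saddC; apply: Hc.
  rewrite /multiset_eq !lmap_map.
  rewrite (eq_map ab) (map_comp b) ; apply: Permutation_map.
  apply: perm_eq_Perm; apply: uniq_perm.
  + by rewrite (map_inj_uniq (@perm_inj _ _)) enum_uniq.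
  + exact: enum_uniq.
  + move=> x; rewrite mem_enum; apply/mapP; exists (s x); first by rewrite mem_enum.
    by rewrite /= (permK s).
- case=> H cd; subst d.
  move: H; rewrite /multiset_eq => H.
  have [l [El Pl]] := @Permutation_map_inv _ _ b _ _ H.
  rewrite !lmap_map in El.
  have pe := @Perm_perm_eq _ _ _ Pl.
  have ul : uniq l by rewrite -(perm_uniq pe) enum_uniq.
  have sl : size l = n by rewrite -(perm_size pe) size_enum_ord.
  pose f (i : 'I_n) := seq.nth i l i.
  have finj : injective f.
    move=> i j; rewrite /f (set_nth_default i j) ?sl //.
    move/eqP; rewrite nth_uniq ?sl // => /eqP; exact: ord_inj.
  pose t := perm finj.
  have abt : forall i, a i = b (t i).
    move=> i; have := congr1 (fun s => seq.nth (a i) s i) El => /=.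
    rewrite (nth_map i) ?size_enum_ord // nth_ord_enum.
    rewrite (set_nth_default (b i)) ?size_map ?sl // (nth_map i) ?sl //.
    by rewrite permE.
  exists (t^-1)%g => x; rewrite /affine_fun; congr sadd.
  rewrite (reindex_inj (@perm_inj _ (t^-1)%g)) /=.
  by apply: eq_bigr => i _; rewrite abt (permKV t).
Qed.
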